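(* Let $\mathcal G$ be the graph defined below. There is no mixed $1$-stack $1$-queue layout $(<,\{S,Q\})$ of $\mathcal G$ for which there exist an edge $(v_1,v_2)\in Q$ and three distinct pairs of twins $s_i,t_i$ ($1\le i\le 3$) with $v_1<s_i<v_2$ and $v_1<t_i<v_2$ for all $1\le i\le 3$.
   Context: Graph $\mathcal G$: take two vertices $A,B$ and $19$ copies of a gadget $H$, identified at $A$ and $B$. Each copy of $H$ consists of two further vertices $s,t$ (called twins) joined by the twin edge $(s,t)$, the edges $(A,s),(A,t),(B,s),(B,t)$, and seven further vertices (called connectors), each of degree $2$ and adjacent to exactly $s$ and $t$. ($A$ and $B$ are not adjacent.) For a vertex ordering $<$ and an edge $e$, let $L(e)<R(e)$ be its endpoints; edges $e,f$ cross if $L(e)<L(f)<R(e)<R(f)$ and nest if $L(e)<L(f)<R(f)<R(e)$. A stack is an edge set with no two crossing edges, a queue an edge set with no two nested edges. A mixed $1$-stack $1$-queue layout is a vertex ordering $<$ together with a partition of the edge set into a stack $S$ and a queue $Q$. *)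

(* Defs.v *)
From HB Require Import structures.
From mathcomp Require Import all_boot.
Set Implicit Arguments. Unset Strict Implicit. Unset Printing Implicit Defensive.

(* Vertices of the graph G: A, B, and for each copy i < 19 of the gadget H
   the twins s_i, t_i and seven connectors c_{i,j} (j < 7). *)
Inductive vert :=
| VA | VB
| VS of 'I_19
| VT of 'I_19
| VC of 'I_19 & 'I_7.

Definition vert_enc (v : vert) : unit + unit + ('I_19 + 'I_19 + 'I_19 * 'I_7) :=
  match v with
  | VA => inl (inl tt) | VB => inl (inr tt)
  | VS i => inr (inl (inl i)) | VT i => inr (inl (inr i))
  | VC i j => inr (inr (i, j)) end.
Definition vert_dec (x : unit + unit + ('I_19 + 'I_19 + 'I_19 * 'I_7)) : vert :=
  match x with
  | inl (inl _) => VA | inl (inr _) => VB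
  | inr (inl (inl i)) => VS i | inr (inl (inr i)) => VT i
  | inr (inr (i, j)) => VC i j end.
Lemma vert_encK : cancel vert_enc vert_dec. Proof. by case. Qed.
HB.instance Definition _ := Finite.copy vert (can_type vert_encK).

Definition adj0 (u v : vert) : bool :=
  match u, v with
  | VS i, VT j => i == j
  | VA, VS _ | VA, VT _ => true
  | VB, VS _ | VB, VT _ => true
  | VS i, VC j _ | VT i, VC j _ => i == j
  | _, _ => false end.

Definition adj (u v : vert) : bool := adj0 u v || adj0 v u.

(* A mixed 1-stack 1-queue layout: a vertex ordering given by an injective
   position map [pos], and a partition of the edge set into a stack S and a
   queue Q, given by a symmetric indicator [inS] (an edge {u,v} is in S iff
   [inS u v], and in Q otherwise). *)
Record layout := Layout {
  pos : vert -> nat;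
  inS : vert -> vert -> bool }.

Definition lt_v (L : layout) (u v : vert) := pos L u < pos L v.

(* e = (a,b), f = (c,d) with a<b, c<d *)
Definition cross (L : layout) (a b c d : vert) :=
  [/\ lt_v L a c, lt_v L c b & lt_v L b d].
Definition nest (L : layout) (a b c d : vert) :=
  [/\ lt_v L a c, lt_v L c d & lt_v L d b].

Definition inSE (L : layout) u v := adj u v && inS L u v.
Definition inQE (L : layout) u v := adj u v && ~~ inS L u v.

Definition is_mixed_layout (L : layout) : Prop :=
  [/\ injective (pos L),
      (forall u v, inS L u v = inS L v u),
      (forall a b c d, inSE L a b -> inSE L c d -> lt_v L a b -> lt_v L c d ->
          ~ cross L a b c d)
    &
      (forall a b c d, inQE L a b -> inQE L c d -> lt_v L a b -> lt_v L c d ->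
          ~ nest L a b c d)].

(* Main.v *)
Require Import Defs.
From mathcomp Require Import all_boot.
From mathcomp Require Import zify.
Set Implicit Arguments. Unset Strict Implicit.

Lemma adj_sym u v : adj u v = adj v u.
Proof. by rewrite /adj orbC. Qed.

Lemma adj_irr v : adj v v = false.
Proof. by case: v. Qed.

Lemma adj_neq u v : adj u v -> u != v.
Proof. by apply: contraTneq => ->; rewrite adj_irr. Qed.

Section H.
End H.

Lemma pos_neq L u v : is_mixed_layout L -> u != v -> pos L u != pos L v.
Proof. by case=> inj _ _ _; apply: contra => /eqP/inj ->. Qed.

Lemma S1 L a b c d : is_mixed_layout L -> adj a b -> adj c d ->
  inS L a b -> inS L c d ->
  ~ (pos L a < pos L c /\ pos L c < pos L b /\ pos L b < pos L d).
Proof.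
case=> _ _ Hs _ hab hcd sab scd [h1 [h2 h3]].
apply: (Hs a b c d); rewrite /inSE ?hab ?hcd ?sab ?scd //.
- by rewrite /lt_v; lia.
- by rewrite /lt_v; lia.
Qed.

Lemma Q1 L a b c d : is_mixed_layout L -> adj a b -> adj c d ->
  ~~ inS L a b -> ~~ inS L c d ->
  ~ (pos L a < pos L c /\ pos L c < pos L d /\ pos L d < pos L b).
Proof.
case=> _ _ _ Hq hab hcd sab scd [h1 [h2 h3]].
apply: (Hq a b c d); rewrite /inQE ?hab ?hcd ?sab ?scd //.
- by rewrite /lt_v; lia.
Qed.

Definition between (x a b : nat) := (a < x /\ x < b) \/ (b < x /\ x < a).

Lemma Sun L a b c d : is_mixed_layout L -> adj a b -> adj c d ->
  inS L a b -> inS L c d ->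
  let p := pos L in
  ~ (p a < p c /\ p c < p b /\ p b < p d) /\
  ~ (p a < p d /\ p d < p b /\ p b < p c) /\
  ~ (p b < p c /\ p c < p a /\ p a < p d) /\
  ~ (p b < p d /\ p d < p a /\ p a < p c) /\
  ~ (p c < p a /\ p a < p d /\ p d < p b) /\
  ~ (p c < p b /\ p b < p d /\ p d < p a) /\
  ~ (p d < p a /\ p a < p c /\ p c < p b) /\
  ~ (p d < p b /\ p b < p c /\ p c < p a).
Proof.
move=> HL hab hcd sab scd /=.
have sba : inS L b a by case: HL => _ Hsym _ _; rewrite Hsym.
have sdc : inS L d c by case: HL => _ Hsym _ _; rewrite Hsym.
have hba : adj b a by rewrite adj_sym.
have hdc : adj d c by rewrite adj_sym.
split; first exact: (S1 HL hab hcd sab scd).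
split; first exact: (S1 HL hab hdc sab sdc).
split; first exact: (S1 HL hba hcd sba scd).
split; first exact: (S1 HL hba hdc sba sdc).
split; first exact: (S1 HL hcd hab scd sab).
split; first exact: (S1 HL hcd hba scd sba).
split; first exact: (S1 HL hdc hab sdc sab).
exact: (S1 HL hdc hba sdc sba).
Qed.

Lemma Qun L a b c d : is_mixed_layout L -> adj a b -> adj c d ->
  ~~ inS L a b -> ~~ inS L c d ->
  let p := pos L in
  ~ (p a < p c /\ p c < p d /\ p d < p b) /\
  ~ (p a < p d /\ p d < p c /\ p c < p b) /\
  ~ (p b < p c /\ p c < p d /\ p d < p a) /\
  ~ (p b < p d /\ p d < p c /\ p c < p a) /\
  ~ (p c < p a /\ p a < p b /\ p b < p d) /\
  ~ (p c < p b /\ p b < p a /\ p a < p d) /\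
  ~ (p d < p a /\ p a < p b /\ p b < p c) /\
  ~ (p d < p b /\ p b < p a /\ p a < p c).
Proof.
move=> HL hab hcd sab scd /=.
have sba : ~~ inS L b a by case: HL => _ Hsym _ _; rewrite Hsym.
have sdc : ~~ inS L d c by case: HL => _ Hsym _ _; rewrite Hsym.
have hba : adj b a by rewrite adj_sym.
have hdc : adj d c by rewrite adj_sym.
split; first exact: (Q1 HL hab hcd sab scd).
split; first exact: (Q1 HL hab hdc sab sdc).
split; first exact: (Q1 HL hba hcd sba scd).
split; first exact: (Q1 HL hba hdc sba sdc).
split; first exact: (Q1 HL hcd hab scd sab).
split; first exact: (Q1 HL hcd hba scd sba).
split; first exact: (Q1 HL hdc hab sdc sab).
exact: (Q1 HL hdc hba sdc sba).
Qed.

Lemma EP L a b c d : is_mixed_layout L -> adj a b -> adj c d ->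
  let p := pos L in
  ((inS L a b : nat) + inS L c d = 2 ->
  ~ (p a < p c /\ p c < p b /\ p b < p d) /\
  ~ (p a < p d /\ p d < p b /\ p b < p c) /\
  ~ (p b < p c /\ p c < p a /\ p a < p d) /\
  ~ (p b < p d /\ p d < p a /\ p a < p c) /\
  ~ (p c < p a /\ p a < p d /\ p d < p b) /\
  ~ (p c < p b /\ p b < p d /\ p d < p a) /\
  ~ (p d < p a /\ p a < p c /\ p c < p b) /\
  ~ (p d < p b /\ p b < p c /\ p c < p a)) /\
  ((inS L a b : nat) + inS L c d = 0 ->
  ~ (p a < p c /\ p c < p d /\ p d < p b) /\
  ~ (p a < p d /\ p d < p c /\ p c < p b) /\
  ~ (p b < p c /\ p c < p d /\ p d < p a) /\
  ~ (p b < p d /\ p d < p c /\ p c < p a) /\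
  ~ (p c < p a /\ p a < p b /\ p b < p d) /\
  ~ (p c < p b /\ p b < p a /\ p a < p d) /\
  ~ (p d < p a /\ p a < p b /\ p b < p c) /\
  ~ (p d < p b /\ p b < p a /\ p a < p c)).
Proof.
move=> HL hab hcd /=; split.
  case sab: (inS L a b); case scd: (inS L c d) => //= _.
  exact: Sun.
case sab: (inS L a b); case scd: (inS L c d) => //= _.
by apply: Qun; rewrite ?sab ?scd.
Qed.

Lemma inside_S L v1 v2 a b : is_mixed_layout L -> inQE L v1 v2 ->
  adj a b -> pos L v1 < pos L a -> pos L a < pos L v2 ->
  pos L v1 < pos L b -> pos L b < pos L v2 -> inS L a b.
Proof.
move=> HL hq hab h1 h2 h3 h4; case: (boolP (inS L a b)) => // nab.
have hd := pos_neq HL (adj_neq hab).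
case/andP: hq => a12 n12.
have := Qun HL a12 hab n12 nab; rewrite /=.
lia.
Qed.

Section Gadget.
Variables (L : layout) (v1 v2 l r : vert) (cs : 'I_7 -> vert).
Hypotheses (HL : is_mixed_layout L) (Hq : inQE L v1 v2)
  (h1 : pos L v1 < pos L l) (h2 : pos L l < pos L r) (h3 : pos L r < pos L v2)
  (csI : injective cs) (al : forall k, adj l (cs k)) (ar : forall k, adj r (cs k)).
Hypothesis Hn : forall k, ((pos L (cs k) <= pos L v1) || (pos L v2 <= pos L (cs k)))
   && (inS L l (cs k) != inS L r (cs k)) = false.

Let p := pos L.

Definition clsn k := let c := cs k in
  if p c <= p v1 then (if (inS L l c : nat) == 1 then 3 else 4)
  else if p v2 <= p c then (if (inS L l c : nat) == 1 then 5 else 6)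
  else if p c < p l then 0 else if p c < p r then 1 else 2.

Lemma single k : let c := cs k in
  (p v1 < p c -> p c < p v2 -> (inS L l c : nat) = 1 /\ (inS L r c : nat) = 1) /\
  (p c <= p v1 \/ p v2 <= p c -> (inS L l c : nat) = inS L r c) /\
  p c <> p l /\ p c <> p r.
Proof.
move=> c; split.
  move=> H1 H2; have ha := al k; have hb := ar k.
  rewrite !(inside_S HL Hq ha) ?(inside_S HL Hq hb) //; lia.
split.
  move=> H; have := Hn k; rewrite -/c.
  have -> : (p c <= p v1) || (p v2 <= p c) by case: H => ->; rewrite ?orbT.
  by case: (inS L l c); case: (inS L r c).
split; apply/eqP.
  by rewrite eq_sym; apply: pos_neq HL (adj_neq (al k)).
by rewrite eq_sym; apply: pos_neq HL (adj_neq (ar k)).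
Qed.

Lemma nat1 (b : bool) : (b : nat) = 1 -> b. Proof. by case: b. Qed.
Lemma nat0 (b : bool) : (b : nat) = 0 -> ~~ b. Proof. by case: b. Qed.
Lemma symS a b : inS L a b = inS L b a.
Proof. by case: HL => _ Hs _ _; rewrite Hs. Qed.

Lemma LL_S c c' : adj l c -> adj r c' -> (inS L l c : nat) = 1 -> (inS L r c' : nat) = 1 ->
  p c < p c' -> p c' < p l -> False.
Proof.
move=> a1 a2 /nat1 b1 /nat1 b2 o1 o2.
apply: (S1 HL (a:=c) (b:=l) (c:=c') (d:=r)); rewrite 1?adj_sym 1?symS //;
 try (move: h2; rewrite /p in o1 o2 *; lia).
Qed.

Lemma LL_Q c c' : adj r c -> adj l c' -> (inS L r c : nat) = 0 -> (inS L l c' : nat) = 0 ->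
  p c < p c' -> p c' < p l -> False.
Proof.
move=> a1 a2 /nat0 b1 /nat0 b2 o1 o2.
apply: (Q1 HL (a:=c) (b:=r) (c:=c') (d:=l)); rewrite 1?adj_sym 1?symS //;
 try (move: h2; rewrite /p in o1 o2 *; lia).
Qed.

Lemma RR_S c c' : adj l c -> adj r c' -> (inS L l c : nat) = 1 -> (inS L r c' : nat) = 1 ->
  p r < p c -> p c < p c' -> False.
Proof.
move=> a1 a2 /nat1 b1 /nat1 b2 o1 o2.
apply: (S1 HL (a:=l) (b:=c) (c:=r) (d:=c')) => //;
 try (move: h2; rewrite /p in o1 o2 *; lia).
Qed.

Lemma RR_Q c c' : adj l c' -> adj r c -> (inS L l c' : nat) = 0 -> (inS L r c : nat) = 0 ->
  p r < p c -> p c < p c' -> False.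
Proof.
move=> a1 a2 /nat0 b1 /nat0 b2 o1 o2.
apply: (Q1 HL (a:=l) (b:=c') (c:=r) (d:=c)) => //;
 try (move: h2; rewrite /p in o1 o2 *; lia).
Qed.

Lemma M_S c c' : adj l c' -> adj r c -> (inS L l c' : nat) = 1 -> (inS L r c : nat) = 1 ->
  p l < p c -> p c < p c' -> p c' < p r -> False.
Proof.
move=> a1 a2 /nat1 b1 /nat1 b2 o1 o2 o3.
apply: (S1 HL (a:=l) (b:=c') (c:=c) (d:=r)) => //; first by rewrite adj_sym.
  by rewrite symS.
Qed.

Lemma norm k : (p (cs k) <= p v1 \/ p v2 <= p (cs k)) /\ (inS L l (cs k) : nat) = inS L r (cs k) \/
   (p v1 < p (cs k) /\ p (cs k) < p v2 /\ (inS L l (cs k) : nat) = 1 /\ (inS L r (cs k) : nat) = 1).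
Proof.
have [F1 [F2 _]] := single k.
case: (leqP (p (cs k)) (p v1)) => a1; first by left; split; [left | apply: F2; left].
case: (leqP (p v2) (p (cs k))) => a2; first by left; split; [right | apply: F2; right].
by right; have [] := F1 a1 a2.
Qed.

Lemma pairF k k' : k != k' -> clsn k = clsn k' -> False.
Proof.
move=> nk.
have D : p (cs k) <> p (cs k').
  apply/eqP; rewrite /p; apply: (@pos_neq L (cs k) (cs k') HL).
  by apply: contra nk => /eqP/csI ->.
have [F3 F4] := (single k).2.2.
have [G3 G4] := (single k').2.2.
have dlr : p l < p r := h2.
move: h1 h3; rewrite -/p => h1' h3'.
rewrite /clsn /= -/p.
have [[Fo Fe]|[Fi1 [Fi2 [Fi3 Fi4]]]] := norm k;
have [[Go Ge]|[Gi1 [Gi2 [Gi3 Gi4]]]] := norm k'.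
all: repeat case: ifP => ?; try done.
all: move=> _.
all: case: (ltngtP (p (cs k)) (p (cs k'))) => o; last by exfalso; apply: D.
all: try (clear F3 F4 G3 G4 D; exfalso; lia).
all: clear D.
all: match goal with
| o : is_true (p (cs ?a) < p (cs ?b)) |- _ =>
  match goal with
  | _ : is_true (p (cs a) <= p v1), _ : is_true (nat_of_bool (inS L l (cs a)) == 1) |- _ =>
      apply: (LL_S (al a) (ar b)); lia
  | _ : is_true (p (cs a) <= p v1) |- _ => apply: (LL_Q (ar a) (al b)); lia
  | _ : is_true (p v2 <= p (cs a)), _ : is_true (nat_of_bool (inS L l (cs a)) == 1) |- _ =>
      apply: (RR_S (al a) (ar b)); lia
  | _ : is_true (p v2 <= p (cs a)) |- _ => apply: (RR_Q (al b) (ar a)); lia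
  | _ : is_true (p (cs a) < p l) |- _ => apply: (LL_S (al a) (ar b)); lia
  | _ : is_true (p (cs a) < p r) |- _ => apply: (M_S (al b) (ar a)); lia
  | |- _ => apply: (RR_S (al a) (ar b)); lia
  end
end.
Qed.
Lemma clsn_lt k : clsn k < 7.
Proof. by rewrite /clsn; repeat case: ifP. Qed.

Definition cls k : 'I_7 := inord (clsn k).

Lemma cls_inj : injective cls.
Proof.
move=> k k' E; case: (eqVneq k k') => // nk; exfalso.
apply: (pairF nk).
have := congr1 val E; rewrite /cls /= !inordK //; exact: clsn_lt.
Qed.

Lemma cls_pre (j : 'I_7) : exists k, clsn k = j.
Proof.
have /codomP [k ->] := injF_onto cls_inj j.
by exists k; rewrite /cls inordK ?clsn_lt.
Qed.

Lemma gadget_contra : False.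
Proof.
have h1' : p v1 < p l := h1.
have h2' : p l < p r := h2.
have h3' : p r < p v2 := h3.
have [k0 E0] := cls_pre (inord 0).
have [k2 E2] := cls_pre (inord 2).
rewrite inordK // in E0; rewrite inordK // in E2.
have P0 : p v1 < p (cs k0) /\ p (cs k0) < p l.
  move: E0; rewrite /clsn -/p; repeat case: ifP => //; move=> *; lia.
have P2 : p r < p (cs k2) /\ p (cs k2) < p v2.
  have [_ [_ [_ Hr]]] := single k2.
  move: E2; rewrite /clsn -/p; repeat case: ifP => //; move=> *; lia.
have [[Fo _]|[_ [_ [_ F4]]]] := norm k0; first by lia.
have [[Go _]|[_ [_ [G3 _]]]] := norm k2; first by lia.
apply: (S1 HL (a:=cs k0) (b:=r) (c:=l) (d:=cs k2)).
- by rewrite adj_sym.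
- exact: al.
- by rewrite symS; apply: nat1.
- exact: nat1.
- rewrite /p in P0 P2 *; move: h2; lia.
Qed.
End Gadget.

Lemma gadget L v1 v2 l r (cs : 'I_7 -> vert) :
  is_mixed_layout L -> inQE L v1 v2 ->
  pos L v1 < pos L l -> pos L l < pos L r -> pos L r < pos L v2 ->
  injective cs -> (forall k, adj l (cs k)) -> (forall k, adj r (cs k)) ->
  exists k, ((pos L (cs k) <= pos L v1) || (pos L v2 <= pos L (cs k)))
   && (inS L l (cs k) != inS L r (cs k)).
Proof.
move=> HL Hq h1 h2 h3 csI al ar.
case: (pickP (fun k => ((pos L (cs k) <= pos L v1) || (pos L v2 <= pos L (cs k)))
   && (inS L l (cs k) != inS L r (cs k)))) => [k Hk|Hn]; first by exists k.
exfalso; exact: (gadget_contra HL Hq h1 h2 h3 csI al ar Hn).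
Qed.

Ltac killneg := exfalso; match goal with H : ~ _ |- _ => apply: H;
   repeat match goal with H' : ~ _ |- _ => clear H' end; lia end.

Lemma two_core L xi yi ci xj yj cj : is_mixed_layout L ->
  adj xi yi -> adj xj yj -> adj ci xi -> adj ci yi -> adj cj xj -> adj cj yj ->
  inS L xi yi -> inS L xj yj -> inS L ci xi -> ~~ inS L ci yi ->
  inS L cj xj -> ~~ inS L cj yj ->
  let p := pos L in
  p xi <> p yi -> p xj <> p yj -> p xi <> p xj -> p xi <> p yj ->
  p yi <> p xj -> p yi <> p yj ->
  (p ci < p xi /\ p ci < p yi /\ p ci < p xj /\ p ci < p yj /\
   p cj < p xi /\ p cj < p yi /\ p cj < p xj /\ p cj < p yj) \/
  (p ci > p xi /\ p ci > p yi /\ p ci > p xj /\ p ci > p yj /\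
   p cj > p xi /\ p cj > p yi /\ p cj > p xj /\ p cj > p yj) ->
  p ci < p cj -> False.
Proof.
move=> HL a1 a2 a3 a4 a5 a6 s1 s2 s3 q3 s4 q4 p d1 d2 d3 d4 d5 d6 side o.
have := Sun HL a3 a5 s3 s4; have := Qun HL a4 a6 q3 q4;
have := Sun HL a1 a2 s1 s2; have := Sun HL a3 a2 s3 s2; have := Sun HL a5 a1 s4 s1.
rewrite /= -/p.
move: o d1 d2 d3 d4 d5 d6 side.
move: (p xi) (p yi) (p xj) (p yj) (p ci) (p cj) => Xi Yi Xj Yj Ci Cj.
clear a1 a2 a3 a4 a5 a6 s1 s2 s3 q3 s4 q4 HL p.
move=> o d1 d2 d3 d4 d5 d6 side.
do 5 (case=> ? [? [? [? [? [? [? ?]]]]]]).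
case: side => [[? [? [? [? [? [? [? ?]]]]]]]|[? [? [? [? [? [? [? ?]]]]]]]].
all: have o1 : Xj < Xi by case: (ltngtP Xi Xj) => h //; killneg.
all: have o2 : Yi < Yj by case: (ltngtP Yi Yj) => h //; killneg.
all: case: (ltngtP Xi Yi) => o3; try killneg.
all: case: (ltngtP Xj Yi) => o4; try killneg.
all: case: (ltngtP Yj Xi) => o5; killneg.
Qed.

Lemma pneq L u v : is_mixed_layout L -> u <> v -> pos L u <> pos L v.
Proof. by move=> [inj _ _ _] uv E; apply: uv; apply: inj. Qed.

Lemma adjST i : adj (VS i) (VT i). Proof. by rewrite /adj /= eqxx. Qed.
Lemma adjTS i : adj (VT i) (VS i). Proof. by rewrite adj_sym adjST. Qed.
Lemma adjCS i k : adj (VC i k) (VS i). Proof. by rewrite /adj /= eqxx. Qed.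
Lemma adjCT i k : adj (VC i k) (VT i). Proof. by rewrite /adj /= eqxx. Qed.

Definition inside L v1 v2 (i : 'I_19) :=
  [/\ lt_v L v1 (VS i), lt_v L (VS i) v2, lt_v L v1 (VT i) & lt_v L (VT i) v2].

Lemma twoG L v1 v2 (i j : 'I_19) (k k' : 'I_7) :
  is_mixed_layout L -> inQE L v1 v2 -> i != j ->
  inside L v1 v2 i -> inside L v1 v2 j ->
  inS L (VS i) (VC i k) != inS L (VT i) (VC i k) ->
  inS L (VS j) (VC j k') != inS L (VT j) (VC j k') ->
  ((pos L (VC i k) <= pos L v1) && (pos L (VC j k') <= pos L v1)) ||
  ((pos L v2 <= pos L (VC i k)) && (pos L v2 <= pos L (VC j k'))) ->
  pos L (VC i k) < pos L (VC j k') -> False.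
Proof.
move=> HL Hq nij [i1 i2 i3 i4] [j1 j2 j3 j4] mi mj side o.
rewrite /lt_v in i1 i2 i3 i4 j1 j2 j3 j4.
have sti : inS L (VS i) (VT i) by apply: (inside_S HL Hq (adjST i)).
have stj : inS L (VS j) (VT j) by apply: (inside_S HL Hq (adjST j)).
have Ei : exists xi yi, ((xi = VS i /\ yi = VT i) \/ (xi = VT i /\ yi = VS i)) /\
   inS L (VC i k) xi /\ ~~ inS L (VC i k) yi.
  have E2 : inS L (VT i) (VC i k) = ~~ inS L (VS i) (VC i k)
    by move: mi; case: (inS L (VT i) (VC i k)); case: (inS L (VS i) (VC i k)).
  case E: (inS L (VS i) (VC i k)) in E2.
    by exists (VS i), (VT i); rewrite !(symS HL (VC i k)) E E2; split; [left|].
  by exists (VT i), (VS i); rewrite !(symS HL (VC i k)) E E2; split; [right|].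
have Ej : exists xj yj, ((xj = VS j /\ yj = VT j) \/ (xj = VT j /\ yj = VS j)) /\
   inS L (VC j k') xj /\ ~~ inS L (VC j k') yj.
  have E2 : inS L (VT j) (VC j k') = ~~ inS L (VS j) (VC j k')
    by move: mj; case: (inS L (VT j) (VC j k')); case: (inS L (VS j) (VC j k')).
  case E: (inS L (VS j) (VC j k')) in E2.
    by exists (VS j), (VT j); rewrite !(symS HL (VC j k')) E E2; split; [left|].
  by exists (VT j), (VS j); rewrite !(symS HL (VC j k')) E E2; split; [right|].
case: Ei => xi [yi [Hi [s3 q3]]]; case: Ej => xj [yj [Hj [s4 q4]]].
have nij' : i <> j by apply/eqP.
case: Hi => [[-> ->]|[-> ->]] in s3 q3 *; case: Hj => [[-> ->]|[-> ->]] in s4 q4 *;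
apply: (two_core HL _ _ _ _ _ _ _ _ s3 q3 s4 q4 _ _ _ _ _ _ _ o);
  rewrite ?adjST ?adjTS ?adjCS ?adjCT ?sti ?stj //;
  try (by rewrite symS);
  try (refine (pneq HL _); first [discriminate | (move=> [E]; exact: nij' E)]).
all: case/orP: side => /andP [c1 c2]; [left|right]; move: i1 i2 i3 i4 j1 j2 j3 j4 c1 c2;
  clear; move=> *; lia.
Qed.

Lemma twoS L v1 v2 (i j : 'I_19) (k k' : 'I_7) :
  is_mixed_layout L -> inQE L v1 v2 -> i != j ->
  inside L v1 v2 i -> inside L v1 v2 j ->
  inS L (VS i) (VC i k) != inS L (VT i) (VC i k) ->
  inS L (VS j) (VC j k') != inS L (VT j) (VC j k') ->
  ((pos L (VC i k) <= pos L v1) && (pos L (VC j k') <= pos L v1)) ||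
  ((pos L v2 <= pos L (VC i k)) && (pos L v2 <= pos L (VC j k'))) -> False.
Proof.
move=> HL Hq nij Ii Ij mi mj side.
case: (ltngtP (pos L (VC i k)) (pos L (VC j k'))) => o.
- exact: (twoG HL Hq nij Ii Ij mi mj side o).
- apply: (twoG HL Hq _ Ij Ii mj mi _ o); first by rewrite eq_sym.
  by case/orP: side => /andP [-> ->]; rewrite ?orbT.
- refine (pneq HL _ o) => -[E _]; by rewrite E eqxx in nij.
Qed.

Theorem lemma3 :
  ~ exists L : layout, is_mixed_layout L /\
    exists (v1 v2 : vert) (i1 i2 i3 : 'I_19),
      [/\ inQE L v1 v2, lt_v L v1 v2,
          uniq [:: i1; i2; i3] &
          forall i, i \in [:: i1; i2; i3] ->
            [/\ lt_v L v1 (VS i), lt_v L (VS i) v2,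
                lt_v L v1 (VT i) & lt_v L (VT i) v2]].
Proof.
case=> L [HL [v1 [v2 [i1 [i2 [i3 [Hq H12 Hu Hin]]]]]]].
have G : forall i, i \in [:: i1; i2; i3] -> exists k,
    ((pos L (VC i k) <= pos L v1) || (pos L v2 <= pos L (VC i k))) &&
    (inS L (VS i) (VC i k) != inS L (VT i) (VC i k)).
  move=> i /Hin [a b c d]; rewrite /lt_v in a b c d.
  have inj : injective (VC i) by move=> x y [].
  have al k : adj (VS i) (VC i k) by rewrite adj_sym adjCS.
  have ar k : adj (VT i) (VC i k) by rewrite adj_sym adjCT.
  case: (ltngtP (pos L (VS i)) (pos L (VT i))) => o.
  - exact: (gadget HL Hq a o d inj al ar).
  - have [k Hk] := gadget HL Hq c o b inj ar al.
    by exists k; rewrite eq_sym.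
  - by exfalso; exact: (pneq HL (u:=VS i) (v:=VT i)).
have m1 : i1 \in [:: i1; i2; i3] by rewrite !inE eqxx.
have m2 : i2 \in [:: i1; i2; i3] by rewrite !inE eqxx ?orbT.
have m3 : i3 \in [:: i1; i2; i3] by rewrite !inE eqxx ?orbT.
move: Hu; rewrite /= !inE negb_or => /and3P [/andP [n12 n13] n23 _].
have [k1 /andP [s1 x1]] := G _ m1.
have [k2 /andP [s2 x2]] := G _ m2.
have [k3 /andP [s3 x3]] := G _ m3.
have I1 := Hin _ m1; have I2 := Hin _ m2; have I3 := Hin _ m3.
case/orP: s1 => s1; case/orP: s2 => s2; case/orP: s3 => s3;
  first [ by apply: (twoS HL Hq n12 I1 I2 x1 x2); rewrite ?s1 ?s2 ?orbT
        | by apply: (twoS HL Hq n13 I1 I3 x1 x3); rewrite ?s1 ?s3 ?orbT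
        | by apply: (twoS HL Hq n23 I2 I3 x2 x3); rewrite ?s2 ?s3 ?orbT ].
Qed.
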